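(* Let $G$ be a reduced strongly co-Hopfian abelian group with torsion subgroup $T=\bigoplus_p T_p$. Then each $T_p$ is finite, and $G\cong \hat G$ for some subgroup $\hat G$ with $T\le \hat G\le \prod_p T_p$ (where $T$ is identified with $\bigoplus_p T_p\le\prod_p T_p$) such that $\hat G/T$ is torsion-free and divisible. In particular, if infinitely many $T_p$ are non-zero, $G$ is an sp-group.
   Context: All groups are abelian. A group $G$ is strongly co-Hopfian if for every endomorphism $f$ of $G$ there is $n\in\mathbb N$ with $f^n(G)=f^{n+1}(G)$. $T$ denotes the maximal torsion subgroup of $G$ and $T_p$ its $p$-primary component. A mixed group $G$ with infinitely many non-zero $p$-components $T_p$ is an sp-group if $G$ is (isomorphic to) a pure subgroup of $\prod_p T_p$ containing $\bigoplus_p T_p$. *)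

(* Defs.v *)
From mathcomp Require Import all_boot all_order all_algebra.
Set Implicit Arguments.
Unset Strict Implicit.
Unset Printing Implicit Defensive.
Import GRing.Theory.
Local Open Scope ring_scope.

Section AbGroups.
Variable G : zmodType.

Definition is_endo (f : G -> G) : Prop := forall x y, f (x + y) = f x + f y.

Definition strongly_coHopfian : Prop :=
  forall f : G -> G, is_endo f ->
    exists n : nat, forall y : G,
      (exists x, iter n f x = y) <-> (exists x, iter n.+1 f x = y).

Definition is_subgroup (D : G -> Prop) : Prop :=
  D 0 /\ (forall x y, D x -> D y -> D (x + y)) /\ (forall x, D x -> D (- x)).

Definition divisible_sub (D : G -> Prop) : Prop :=
  forall d (n : nat), D d -> (0 < n)%N -> exists e, D e /\ e *+ n = d.

Definition reduced : Prop :=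
  forall D, is_subgroup D -> divisible_sub D -> forall x, D x -> x = 0.

Definition torsion (x : G) : Prop := exists n : nat, (0 < n)%N /\ x *+ n = 0.
Definition p_comp (p : nat) (x : G) : Prop := exists k : nat, x *+ (p ^ k) = 0.

Definition finite_set (A : G -> Prop) : Prop :=
  exists s : seq G, forall x, A x -> x \in s.

Definition infinitely_many_Tp : Prop :=
  forall N : nat, exists p : nat, (N < p)%N /\ prime p /\
    exists x, p_comp p x /\ x != 0.

(* The product  prod_p T_p  is modelled as the functions v : nat -> G with
   v p in T_p for primes p and v n = 0 for non-primes n, with pointwise
   operations. *)
Definition in_prodT (v : nat -> G) : Prop :=
  (forall p, prime p -> p_comp p (v p)) /\ (forall n, ~~ prime n -> v n = 0).

(* the direct sum  (+)_p T_p  inside the product: finitely supported elements *)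
Definition fin_supp (v : nat -> G) : Prop :=
  exists N : nat, forall n, (N <= n)%N -> v n = 0.

Definition in_sumT (v : nat -> G) : Prop := in_prodT v /\ fin_supp v.

(* phi : G -> prod_p T_p is an injective homomorphism (so G is isomorphic
   to its image  Ghat = phi(G)  ). *)
Definition embeds_into_prodT (phi : G -> nat -> G) : Prop :=
  (forall x, in_prodT (phi x)) /\
  (forall x y n, phi (x + y) n = phi x n + phi y n) /\
  (forall x y, (forall n, phi x n = phi y n) -> x = y).

Definition image_contains_sumT (phi : G -> nat -> G) : Prop :=
  forall v, in_sumT v -> exists x, forall n, phi x n = v n.

(* phi(G) / (+)_p T_p is torsion-free *)
Definition quotient_torsion_free (phi : G -> nat -> G) : Prop :=
  forall x (m : nat), (0 < m)%N ->
    fin_supp (fun n => phi x n *+ m) -> fin_supp (phi x).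

(* phi(G) / (+)_p T_p is divisible *)
Definition quotient_divisible (phi : G -> nat -> G) : Prop :=
  forall x (m : nat), (0 < m)%N ->
    exists y, fin_supp (fun n => phi y n *+ m - phi x n).

Definition image_pure (phi : G -> nat -> G) : Prop :=
  forall x (m : nat), (0 < m)%N ->
    (exists v, in_prodT v /\ forall n, v n *+ m = phi x n) ->
    exists y, forall n, phi y n *+ m = phi x n.

Definition sp_group : Prop :=
  infinitely_many_Tp /\
  exists phi, embeds_into_prodT phi /\ image_contains_sumT phi /\ image_pure phi.

End AbGroups.

(* Main.v *)
Require Import Defs.
From HB Require Import structures.
From mathcomp Require Import all_boot all_order all_algebra.
From mathcomp Require classical_sets.
From Stdlib Require Import Classical ClassicalEpsilon.
Set Implicit Arguments. Unset Strict Implicit. Unset Printing Implicit Defensive.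
Import GRing.Theory.
Local Open Scope ring_scope.

Lemma myZorn (T : Type) (P : (T -> Prop) -> Prop) :
  (forall F : (T -> Prop) -> Prop, (forall X, F X -> P X) ->
     (forall X Y, F X -> F Y -> (forall t, X t -> Y t) \/ (forall t, Y t -> X t)) ->
     P (fun a => exists2 X, F X & X a)) ->
  exists A, P A /\ forall B, (forall t, A t -> B t) -> ~ (forall t, B t -> A t) -> ~ P B.
Proof.
move=> H; have [|A [PA HA]] := @classical_sets.Zorn_bigcup T P.
  by move=> F FP tot; apply: H => //.
by exists A; split => // B AB BA; apply: HA; split.
Qed.


Section Gen.
Variable G : zmodType.
Implicit Types (z x y : G).

Lemma mulrn_dvd0 z m k : z *+ m = 0 -> (m %| k)%N -> z *+ k = 0.
Proof. by move=> zm /dvdnP[q ->]; rewrite mulnC mulrnA zm mul0rn. Qed.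

Lemma mulrn_mod z m k : z *+ m = 0 -> z *+ k = z *+ (k %% m).
Proof.
move=> zm; rewrite {1}(divn_eq k m) mulrnDr.
by rewrite (mulrn_dvd0 zm (dvdn_mull _ (dvdnn m))) add0r.
Qed.

Lemma mulrn_gcd0 z a b : z *+ a = 0 -> z *+ b = 0 -> z *+ gcdn a b = 0.
Proof.
case: (posnP a) => [->|a0]; first by rewrite gcd0n.
move=> za zb; case: (Bezoutl b a0) => t _ /dvdnP[q hq].
have : z *+ (gcdn a b + t * b) = 0 by rewrite hq (mulrn_dvd0 za (dvdn_mull _ (dvdnn a))).
by rewrite mulrnDr (mulrn_dvd0 zb (dvdn_mull _ (dvdnn b))) addr0.
Qed.

Lemma coprime_zero z a b : coprime a b -> z *+ a = 0 -> z *+ b = 0 -> z = 0.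
Proof. by move=> /eqP cab za zb; have := mulrn_gcd0 za zb; rewrite cab. Qed.

Lemma coprime_div z a n : coprime a n -> z *+ a = 0 -> exists u, z *+ u *+ n = z.
Proof.
case: (posnP n) => [->|n0].
  by rewrite /coprime gcdn0 => /eqP -> ; exists 0%N; rewrite mulr0n.
move=> /eqP cop za; case: (egcdnP a n0) => km kn e _.
exists km; rewrite -mulrnA e mulrnDr gcdnC cop.
by rewrite (mulrn_dvd0 za (dvdn_mull _ (dvdnn a))) add0r.
Qed.

End Gen.


Section PiP.
Variable G : zmodType.
Implicit Types (z x y h : G).

Definition coH_N (p : nat) : nat := epsilon (inhabits 0%N) (fun N =>
  forall y : G, (exists x, x *+ p ^ N = y) <-> (exists x, x *+ p ^ N.+1 = y)).
Definition Hp (p : nat) (y : G) := exists x, x *+ p ^ coH_N p = y.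
Definition hpart p x := epsilon (inhabits 0) (fun h => Hp p h /\ h *+ p ^ coH_N p = x *+ p ^ coH_N p).
Definition pip p x := x - hpart p x.

Lemma mulrn_add_closed (D : G -> Prop) : is_subgroup D -> forall x k, D x -> D (x *+ k).
Proof.
move=> [D0 [DD DN]] x k Dx; elim: k => [|k IH]; first by rewrite mulr0n.
by rewrite mulrS; apply: DD.
Qed.

Lemma iter_mulrn (p n : nat) x : iter n (fun x => x *+ p) x = x *+ p ^ n.
Proof. by elim: n => [|n IH] //=; rewrite IH -mulrnA expnSr. Qed.

Variable hred : reduced G.
Variable hco : strongly_coHopfian G.

Lemma coH_N_spec p : forall y : G, (exists x, x *+ p ^ coH_N p = y) <-> (exists x, x *+ p ^ (coH_N p).+1 = y).
Proof.
pose P := fun N => forall y : G, (exists x, x *+ p ^ N = y) <-> (exists x, x *+ p ^ N.+1 = y).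
suff : P (coH_N p) by [].
apply: epsilon_spec.
have [|N HN] := hco (f := fun x => x *+ p); first by move=> x y; rewrite mulrnDl.
exists N => y; have E n x : iter n (fun x : G => x *+ p) x = x *+ p ^ n := iter_mulrn p n x.
have [h1 h2] := HN y; split.
  by move=> [x hx]; have [|x' hx'] := h1; [exists x; rewrite E | exists x'; rewrite -E].
by move=> [x hx]; have [|x' hx'] := h2; [exists x; rewrite E | exists x'; rewrite -E].
Qed.

Lemma Hp_more p y j : Hp p y -> exists x, x *+ p ^ (coH_N p + j) = y.
Proof.
elim: j y => [|j IH] y; first by rewrite addn0.
move=> /IH [x hx]; have [/(_ (ex_intro _ x erefl)) [x' hx'] _] := coH_N_spec p (x *+ p ^ coH_N p).
exists x'; rewrite -hx addnS -addSn expnD mulrnA hx' -mulrnA -expnD //.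
Qed.

Lemma Hp_sub p : is_subgroup (Hp p).
Proof.
split; first by exists 0; rewrite mul0rn.
split; first by move=> _ _ [x <-] [y <-]; exists (x + y); rewrite mulrnDl.
by move=> _ [x <-]; exists (- x); rewrite mulNrn.
Qed.

Variable p : nat.
Hypothesis pr : prime p.

Definition Dp y := Hp p y /\ exists k, y *+ p ^ k = 0.

Lemma Dp_zero y : Dp y -> y = 0.
Proof.
apply: hred.
- have [H0 [HD HN]] := Hp_sub p.
  split; first by split=> //; exists 0%N; rewrite mul0rn.
  split.
    move=> x z [Hx [k hk]] [Hz [l hl]]; split; first exact: HD.
    by exists (k + l)%N; rewrite mulrnDl expnD mulrnA hk mul0rn mulnC mulrnA hl mul0rn addr0.
  by move=> x [Hx [k hk]]; split; [exact: HN | exists k; rewrite mulNrn hk oppr0].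
- move=> d n Dd; elim: n {-2}n (leqnn n) d Dd => [|m IH] n.
    by rewrite leqn0 => /eqP ->.
  move=> lenm d [Hd [k hk]] n0.
  case pn: (p %| n)%N.
  + move: pn => /dvdnP [n' en].
    have n'0 : (0 < n')%N by move: n0; rewrite en muln_gt0 => /andP[].
    have n'm : (n' <= m)%N.
      rewrite -ltnS (leq_trans _ lenm) // en -{1}(muln1 n') ltn_pmul2l //.
      exact: prime_gt1.
    have [x hx] := Hp_more 1 Hd.
    have De : Dp (x *+ p ^ coH_N p).
      split; first by exists x.
      by exists k.+1; rewrite -mulrnA -expnD -add1n addnA expnD mulrnA hx hk.
    have [e [De' he]] := IH n' n'm _ De n'0.
    exists e; split => //.
    by rewrite en mulrnA he -mulrnA -expnSr -addn1 hx.
  + have cop : coprime (p ^ k) n.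
      case: (k) => [|k']; first by rewrite expn0 coprime1n.
      by rewrite coprime_pexpl // prime_coprime // pn.
    have [u hu] := coprime_div cop hk.
    exists (d *+ u); split => //; split; first exact: mulrn_add_closed (Hp_sub p) _ _ Hd.
    by exists k; rewrite mulrnAC hk mul0rn.
Qed.

Local Notation N := (coH_N p).

Lemma tors_bnd x k : x *+ p ^ k = 0 -> x *+ p ^ N = 0.
Proof. by move=> hk; apply: Dp_zero; split; [exists x | exists k; rewrite mulrnAC hk mul0rn]. Qed.

Lemma Hp_tors h : Hp p h -> h *+ p ^ N = 0 -> h = 0.
Proof. by move=> Hh hN; apply: Dp_zero; split => //; exists N. Qed.

Lemma hpart_spec x : Hp p (hpart p x) /\ hpart p x *+ p ^ N = x *+ p ^ N.
Proof.
pose P := fun h => Hp p h /\ h *+ p ^ N = x *+ p ^ N.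
suff : P (hpart p x) by [].
apply: epsilon_spec.
have [|g hg] := @Hp_more p (x *+ p ^ N) N; first by exists x.
by exists (g *+ p ^ N); split; [exists g | rewrite -mulrnA -expnD hg].
Qed.

Lemma hpart_uniq x h : Hp p h -> h *+ p ^ N = x *+ p ^ N -> hpart p x = h.
Proof.
move=> Hh hh; have [H1 H2] := hpart_spec x; have [H0 [HD HN]] := Hp_sub p.
apply/eqP; rewrite -subr_eq0; apply/eqP; apply: Hp_tors; first by apply: HD => //; exact: HN.
by rewrite mulrnBl H2 hh subrr.
Qed.

Lemma pip_add x y : pip p (x + y) = pip p x + pip p y.
Proof.
rewrite /pip (@hpart_uniq (x + y) (hpart p x + hpart p y)).
- by rewrite opprD addrACA.
- by have [_ [HD _]] := Hp_sub p; apply: HD; [case: (hpart_spec x) | case: (hpart_spec y)].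
by rewrite !mulrnDl (proj2 (hpart_spec x)) (proj2 (hpart_spec y)).
Qed.

Lemma pip0 : pip p 0 = 0.
Proof. by have := pip_add 0 0; rewrite addr0 => /eqP; rewrite addrC -subr_eq subrr eq_sym => /eqP. Qed.

Lemma pip_neg x : pip p (- x) = - pip p x.
Proof. by apply/eqP; rewrite -addr_eq0 -pip_add addNr pip0. Qed.

Lemma pip_sub x y : pip p (x - y) = pip p x - pip p y.
Proof. by rewrite pip_add pip_neg. Qed.

Lemma pip_mulrn x k : pip p (x *+ k) = pip p x *+ k.
Proof. by elim: k => [|k IH]; rewrite ?pip0 // !mulrS pip_add IH. Qed.

Lemma pip_bnd x : pip p x *+ p ^ N = 0.
Proof. by rewrite /pip mulrnBl (proj2 (hpart_spec x)) subrr. Qed.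

Lemma pip_id x : x *+ p ^ N = 0 -> pip p x = x.
Proof.
move=> hx; rewrite /pip (@hpart_uniq x 0) ?subr0 ?mul0rn ?hx //.
by case: (Hp_sub p).
Qed.

Lemma pip_H x : Hp p x -> pip p x = 0.
Proof. by move=> Hx; rewrite /pip (@hpart_uniq x x) ?subrr. Qed.

Lemma pip0_H x : pip p x = 0 -> Hp p x.
Proof. by rewrite /pip => /eqP; rewrite subr_eq0 => /eqP ->; case: (hpart_spec x). Qed.

Lemma pip_other q t k : prime q -> q != p -> t *+ q ^ k = 0 -> pip p t = 0.
Proof.
move=> prq qp ht; apply: (@coprime_zero _ _ (p ^ N) (q ^ k)).
- by apply: coprimeXl; apply: coprimeXr; rewrite prime_coprime // dvdn_prime2 // eq_sym.
- exact: pip_bnd.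
by rewrite -pip_mulrn ht pip0.
Qed.

Lemma Hp_pdiv h : Hp p h -> exists e, Hp p e /\ e *+ p = h.
Proof.
move=> /(Hp_more 1) [x hx]; exists (x *+ p ^ N); split; first by exists x.
by rewrite -mulrnA -expnSr -addn1.
Qed.

Lemma pcomp_pip x : p_comp p x -> pip p x = x.
Proof. by move=> [k hk]; apply: pip_id; exact: tors_bnd hk. Qed.

End PiP.


Section Ext.
Variable G : zmodType.
Implicit Types (z x y a b c : G).

Definition proj (S : G -> Prop) (pi : G -> G) :=
  [/\ (forall x y, pi (x + y) = pi x + pi y), (forall x, S (pi x)) & (forall s, S s -> pi s = s)].

Variable p : nat.
Hypothesis pr : prime p.

Definition bnd (S : G -> Prop) n := forall s, S s -> s *+ p ^ n = 0.
Definition injcond (B : G -> Prop) n :=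
  forall b m, B b -> (m <= n)%N -> b *+ p ^ (n - m) = 0 -> exists c, B c /\ c *+ p ^ m = b.

Lemma add_0 (f : G -> G) : (forall x y, f (x + y) = f x + f y) -> f 0 = 0.
Proof.
move=> fa; have := fa 0 0; rewrite addr0 => /eqP.
by rewrite -subr_eq subrr eq_sym => /eqP.
Qed.

Lemma add_mulrn (f : G -> G) : (forall x y, f (x + y) = f x + f y) ->
  forall x k, f (x *+ k) = f x *+ k.
Proof.
move=> fa x k; have f0 := add_0 fa.
by elim: k => [|k IH]; rewrite ?mulr0n // !mulrS fa IH.
Qed.

Lemma add_neg (f : G -> G) : (forall x y, f (x + y) = f x + f y) -> forall x, f (- x) = - f x.
Proof.
by move=> fa x; apply/eqP; rewrite -addr_eq0 -fa addNr add_0.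
Qed.

Lemma proj_sub S pi : proj S pi -> is_subgroup S.
Proof.
move=> [pa pS pid]; split; first by rewrite -(add_0 pa).
split; first by move=> x y Sx Sy; rewrite -(pid x) // -(pid y) // -pa.
by move=> x Sx; rewrite -(pid x) // -add_neg.
Qed.

Lemma bnd_neg S n x : bnd S n -> S x -> - x = x *+ (p ^ n).-1.
Proof.
move=> bS Sx; apply/eqP; rewrite eq_sym -addr_eq0 -mulrSr prednK ?bS //.
by rewrite expn_gt0 prime_gt0.
Qed.

Lemma min_ex (P : nat -> Prop) : (exists n, P n) -> exists m, P m /\ forall k, (k < m)%N -> ~ P k.
Proof.
move=> [n Pn]; apply: NNPP => nomin.
have : forall j k, (k <= j)%N -> ~ P k.
  elim=> [|j IH] k.
    rewrite leqn0 => /eqP -> P0; apply: nomin; exists 0%N; split => //.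
  rewrite leq_eqVlt => /orP[/eqP -> Pk|]; last exact: IH.
  by apply: nomin; exists j.+1; split => // k' lt; apply: (IH k' lt).
by move/(_ n n (leqnn n)).
Qed.

Definition good (S B : G -> Prop) (X : G * G -> Prop) :=
  [/\ (forall a b c, X (a, b) -> X (a, c) -> b = c),
      (forall a b, X (a, b) -> S a /\ B b),
      (forall a b a' b', X (a, b) -> X (a', b') -> X (a + a', b + b')) &
      (forall b, B b -> X (b, b))].

Lemma ext S pi n B : proj S pi -> bnd S n -> is_subgroup B -> (forall b, B b -> S b) ->
  injcond B n -> exists rho, proj B rho.
Proof.
move=> prS bS sgB BS inj.
have : exists A, (good S B A \/ forall t, ~ A t) /\ forall B', (forall t, A t -> B' t) ->
    ~ (forall t, B' t -> A t) -> ~ (good S B B' \/ forall t, ~ B' t).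
  apply: (@myZorn (G * G) (fun X => good S B X \/ forall t, ~ X t)).
  move=> F FP tot.
  case: (classic (exists X t, F X /\ X t)) => [[X0 [t0 [FX0 X0t0]]] | none]; last first.
    by right => t [X FX Xt]; apply: none; exists X, t.
  left.
  have gX X t : F X -> X t -> good S B X.
    by move=> FX Xt; case: (FP X FX) => // h; exfalso; exact: h t Xt.
  split.
  - move=> a b c [X1 F1 X1ab] [X2 F2 X2ac].
    case: (tot X1 X2 F1 F2) => sub.
    + by case: (gX X2 _ F2 X2ac) => fun2 _ _ _; apply: fun2 (sub _ X1ab) X2ac.
    + by case: (gX X1 _ F1 X1ab) => fun1 _ _ _; apply: fun1 X1ab (sub _ X2ac).
  - by move=> a b [X FX Xab]; case: (gX X _ FX Xab) => _ h _ _; exact: h.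
  - move=> a b a' b' [X1 F1 X1ab] [X2 F2 X2ac].
    case: (tot X1 X2 F1 F2) => sub.
    + by exists X2 => //; case: (gX X2 _ F2 X2ac) => _ _ h _; apply: h (sub _ X1ab) X2ac.
    + by exists X1 => //; case: (gX X1 _ F1 X1ab) => _ _ h _; apply: h X1ab (sub _ X2ac).
  - by move=> b Bb; exists X0 => //; case: (gX _ _ FX0 X0t0) => _ _ _ h; exact: h.
move=> [A [PA maxA]].
have [B0 [BD BN]] := sgB.
have gA : good S B A.
  case: PA => // emp; exfalso.
  apply: (maxA (fun t => B t.1 /\ t.2 = t.1)).
  - by move=> t At; exfalso; exact: emp t At.
  - by move=> h; exact: emp (0,0) (h (0,0) (conj B0 erefl)).
  - left; split.
    + by move=> a b c /= [_ ->] [_ ->].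
    + by move=> a b /= [Ba ->]; split => //; exact: BS.
    + by move=> a b a' b' /= [Ba ->] [Ba' ->]; split => //; exact: BD.
    + by move=> b Bb.
case: gA => Afun Asub Aadd Aid.
have A0 : A (0, 0) := Aid 0 B0.
have Amul a b k : A (a, b) -> A (a *+ k, b *+ k).
  move=> Aab; elim: k => [|k IH]; first by rewrite !mulr0n.
  by rewrite !mulrS; apply: Aadd.
have Aneg a b : A (a, b) -> A (- a, - b).
  move=> Aab; have [Sa Bb] := Asub _ _ Aab.
  by rewrite (bnd_neg bS Sa) (bnd_neg bS (BS _ Bb)); apply: Amul.
have Dall : forall x, S x -> exists b, A (x, b).
  move=> x Sx; apply: NNPP => nD.
  pose D a := exists b, A (a, b).
  have [|m [[h Ah] minm]] := @min_ex (fun m => D (x *+ p ^ m)).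
    by exists n; rewrite bS //; exists 0.
  have mn : (m <= n)%N.
    by rewrite leqNgt; apply/negP => nm; apply: (minm n nm); rewrite bS //; exists 0.
  have hn0 : h *+ p ^ (n - m) = 0.
    have := Amul _ _ (p ^ (n - m))%N Ah; rewrite -mulrnA -expnD subnKC // bS // => A2.
    by apply: Afun A2 A0.
  have [c [Bc hc]] := inj h m (proj2 (Asub _ _ Ah)) mn hn0.
  have key k b : A (x *+ k, b) -> b = c *+ k.
    move=> Axk.
    have pm0 : (0 < p ^ m)%N by rewrite expn_gt0 prime_gt0.
    have Aq : A (x *+ (k %/ p ^ m * p ^ m), h *+ (k %/ p ^ m)).
      by rewrite mulnC mulrnA; apply: Amul.
    have Ar : A (x *+ (k %% p ^ m), b - h *+ (k %/ p ^ m)).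
      have := Aadd _ _ _ _ Axk (Aneg _ _ Aq).
      by rewrite {1}(divn_eq k (p ^ m)) mulrnDr addrC addKr.
    case: (posnP (k %% p ^ m)) => r0.
      move: Ar; rewrite r0 mulr0n => Ar; have := Afun _ _ _ Ar A0.
      move/eqP; rewrite subr_eq0 => /eqP ->.
      by rewrite -hc -mulrnA {2}(divn_eq k (p ^ m)) r0 addn0 mulnC.
    exfalso.
    have [r' cop er] := pfactor_coprime pr r0.
    set v := logn p (k %% p ^ m) in er.
    have vm : (v < m)%N.
      rewrite -(ltn_exp2l _ _ (prime_gt1 pr)) (@leq_ltn_trans (k %% p ^ m)) //.
        by apply: dvdn_leq => //; rewrite {1}er dvdn_mull.
      exact: ltn_pmod.
    apply: (minm v vm).
    have z0 : x *+ p ^ v *+ p ^ n = 0 by rewrite mulrnAC bS // mul0rn.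
    have [u hu] := coprime_div (coprimeXl n (cop : coprime p r')) z0.
    exists ((b - h *+ (k %/ p ^ m)) *+ u); rewrite -hu mulrnAC -mulrnA mulrnA -(mulrnA x) (mulnC (p ^ v)%N) -er.
    exact: Amul.
  pose A' := fun t : G * G => exists a b k, [/\ A (a, b), t.1 = a + x *+ k & t.2 = b + c *+ k].
  have Sc : S c := BS _ Bc.
  have Sxk k : S (x *+ k) := mulrn_add_closed (proj_sub prS) k Sx.
  have Sck k : S (c *+ k) := mulrn_add_closed (proj_sub prS) k Sc.
  apply: (maxA A').
  - by move=> [a b] Aab; exists a, b, 0%N; rewrite !mulr0n !addr0.
  - by move=> h2; apply: nD; exists c; apply: (h2 (x, c)); exists 0, 0, 1%N; rewrite !add0r.
  left; split.
  - move=> a b1 b2 [a1 [c1 [k1 [A1 /= e1 f1]]]] [a2 [c2 [k2 [A2 /= e2 f2]]]].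
    rewrite f1 f2.
    have Ak : A (x *+ (k1 + k2 * (p ^ n).-1), c2 - c1).
      rewrite mulrnDr mulrnA -(bnd_neg bS (Sxk k2)).
      have -> : x *+ k1 - x *+ k2 = a2 - a1.
        by apply/eqP; rewrite subr_eq addrAC -e2 e1 addrAC subrr add0r.
      exact: Aadd A2 (Aneg _ _ A1).
    move/key: Ak; rewrite mulrnDr mulrnA -(bnd_neg bS (Sck k2)) => e.
    by move/eqP: e; rewrite subr_eq => /eqP ->; rewrite addrAC subrK addrC.
  - move=> a b [a1 [b1 [k [A1 /= -> ->]]]]; have [Sa1 Bb1] := Asub _ _ A1.
    have [_ [SD _]] := proj_sub prS.
    split; [apply: SD => //; exact: mulrn_add_closed (proj_sub prS) _ _ Sx
           | apply: BD => //; exact: mulrn_add_closed sgB _ _ Bc].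
  - move=> a b a' b' [a1 [b1 [k [A1 /= -> ->]]]] [a2 [b2 [k' [A2 /= -> ->]]]].
    exists (a1 + a2), (b1 + b2), (k + k')%N; split => //=.
    + exact: Aadd.
    + by rewrite mulrnDr addrACA.
    + by rewrite mulrnDr addrACA.
  - by move=> b Bb; exists b, b, 0%N; rewrite !mulr0n !addr0; split => //; exact: Aid.
pose rho x := epsilon (inhabits 0) (fun b => A (pi x, b)).
have Arho x : A (pi x, rho x).
  have [pa pS pid] := prS.
  by have [b Ab] := Dall _ (pS x); apply: (epsilon_spec (inhabits 0) (fun b => A (pi x, b))); exists b.
have [pa pS pid] := prS.
exists rho; split.
- move=> x y; apply: (Afun (pi (x + y))); first exact: Arho.
  by rewrite pa; apply: Aadd; apply: Arho.
- by move=> x; exact: proj2 (Asub _ _ (Arho x)).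
- move=> b Bb; apply: (Afun (pi b)); first exact: Arho.
  by rewrite (pid b (BS b Bb)); exact: Aid.
Qed.
End Ext.


Section Fin.
Variable G : zmodType.
Implicit Types (z x y a b c : G).

Lemma fin_sub (A B : G -> Prop) : finite_set A -> (forall x, B x -> A x) -> finite_set B.
Proof. by move=> [l hl] BA; exists l => x /BA /hl. Qed.

Lemma fin_sum (A C B : G -> Prop) : finite_set A -> finite_set C ->
  (forall x, B x -> exists a c, [/\ A a, C c & x = a + c]) -> finite_set B.
Proof.
move=> [la ha] [lc hc] hB; exists [seq a + c | a <- la, c <- lc] => x /hB [a [c [Aa Cc ->]]].
by apply: allpairs_f; [apply: ha | apply: hc].
Qed.

Lemma fin_cyc z M : (0 < M)%N -> z *+ M = 0 -> finite_set (fun x => exists j, x = z *+ j).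
Proof.
move=> M0 zM; exists [seq z *+ j | j <- iota 0 M] => x [j ->].
rewrite (mulrn_mod j zM); apply: map_f; rewrite mem_iota add0n ltn_pmod //.
Qed.

Variable p : nat.
Hypothesis pr : prime p.

Lemma order_pn y k (w : nat) : y *+ p ^ k.+1 = 0 -> y *+ p ^ k != 0 -> y *+ w = 0 -> (p ^ k.+1 %| w)%N.
Proof.
move=> yn yk ya; have yg := mulrn_gcd0 ya yn.
have : (gcdn w (p ^ k.+1) %| p ^ k.+1)%N by apply: dvdn_gcdr.
case/(dvdn_pfactor _ _ pr) => e le eg.
case: (ltngtP e k.+1) => [ek|ke|ek].
- exfalso; move/negP: yk; apply; apply/eqP.
  by rewrite -(subnKC (ek : e <= k)%N) expnD mulrnA -eg yg mul0rn.
- by move: le; rewrite leqNgt ke.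
- by rewrite -ek -eg dvdn_gcdl.
Qed.

Definition topS (S : G -> Prop) k z := exists s, S s /\ z = s *+ p ^ k.

Lemma peel S pi k y : proj S pi -> bnd p S k.+1 -> S y -> y *+ p ^ k != 0 ->
  exists S' pi', [/\ proj S' pi', bnd p S' k.+1, (forall s, S' s -> S s),
   (forall s, S' s -> s *+ p ^ k != y *+ p ^ k) & (finite_set S' -> finite_set S)].
Proof.
move=> prS bS Sy yk.
have yn : y *+ p ^ k.+1 = 0 := bS _ Sy.
pose B b := exists j, b = y *+ j.
have sgS := proj_sub prS.
have sgB : is_subgroup B.
  split; first by exists 0%N.
  split; first by move=> _ _ [i ->] [j ->]; exists (i + j)%N; rewrite mulrnDr.
  move=> _ [j ->]; rewrite (bnd_neg pr bS (mulrn_add_closed sgS j Sy)).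
  by exists (j * (p ^ k.+1).-1)%N; rewrite mulrnA.
have BS b : B b -> S b by move=> [j ->]; exact: (mulrn_add_closed sgS j Sy).
have inj : injcond p B k.+1.
  move=> _ m [j ->] mn hj.
  have : (p ^ k.+1 %| j * p ^ (k.+1 - m))%N by apply: (order_pn yn yk); rewrite mulrnA.
  rewrite -{1}(subnKC mn) expnD dvdn_pmul2r ?expn_gt0 ?prime_gt0 // => dj.
  by exists (y *+ (j %/ p ^ m)%N); split; [exists (j %/ p ^ m)%N | rewrite -mulrnA divnK].
have [rho [ra rB rid]] := ext pr prS bS sgB BS inj.
pose S' s := S s /\ rho s = 0.
have [pa pS pid] := prS.
have rhoB x : rho (rho x) = rho x by apply: rid.
exists S', (fun x => pi x - rho (pi x)); split.
- split.
  + by move=> x z; rewrite pa ra opprD addrACA.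
  + move=> x; split; first by have [_ [SD SN]] := sgS; apply: SD; [apply: pS | apply: SN; apply: BS].
    by rewrite ra (add_neg ra) rhoB subrr.
  + by move=> s [Ss rs]; rewrite pid // rs subr0.
- by move=> s [Ss _]; exact: bS.
- by move=> s [].
- move=> s [Ss rs]; apply/negP => /eqP e.
  have : rho (s *+ p ^ k) = rho (y *+ p ^ k) by rewrite e.
  rewrite (add_mulrn ra) rs mul0rn rid; last by exists (p ^ k)%N.
  by move=> /esym/eqP; rewrite (negbTE yk).
- move=> fS'; apply: (fin_sum (fin_cyc _ yn) fS') => [|s Ss].
    by rewrite expn_gt0 prime_gt0.
  exists (rho s), (s - rho s); split.
  + exact: rB.
  + split; first by have [_ [SD SN]] := sgS; apply: SD => //; apply: SN; apply: BS.
    by rewrite ra (add_neg ra) rhoB subrr.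
  + by rewrite addrC subrK.
Qed.


End Fin.


Section SumG.
Variable G : zmodType.
Variable F : nat -> G.

Lemma sum_shift0 (a : nat -> nat) i M : (i <= M)%N ->
  \sum_(i <= j < M) F j *+ a j = \sum_(0 <= j < M) F j *+ (if (i <= j)%N then a j else 0%N).
Proof.
move=> iM; rewrite [RHS](big_cat_nat (n := i)) //=.
have -> : \sum_(0 <= j < i) F j *+ (if (i <= j)%N then a j else 0%N) = 0.
  by rewrite big_nat_cond big1 // => j /andP[/andP[_ ji] _]; rewrite leqNgt ji mulr0n.
by rewrite add0r; apply: eq_big_nat => j /andP[ij _]; rewrite ij.
Qed.

Lemma sum_pad (a : nat -> nat) M K : (M <= K)%N ->
  \sum_(0 <= j < M) F j *+ a j = \sum_(0 <= j < K) F j *+ (if (j < M)%N then a j else 0%N).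
Proof.
move=> MK; rewrite [RHS](big_cat_nat (n := M)) //=.
have -> : \sum_(M <= j < K) F j *+ (if (j < M)%N then a j else 0%N) = 0.
  by rewrite big_nat_cond big1 // => j /andP[/andP[Mj _] _]; rewrite ltnNge Mj mulr0n.
by rewrite addr0; apply: eq_big_nat => j /andP[_ jM]; rewrite jM.
Qed.

Lemma sum_shift1 (a : nat -> nat) i M :
  \sum_(i <= j < M) F j.+1 *+ a j = \sum_(i.+1 <= j < M.+1) F j *+ a j.-1.
Proof. by rewrite big_add1. Qed.

End SumG.


Lemma neg_bnd (G : zmodType) (w : G) q : (0 < q)%N -> w *+ q = 0 -> - w = w *+ q.-1.
Proof.
move=> q0 wq; apply/eqP; rewrite eq_sym -addr_eq0 -mulrSr prednK //; exact/eqP.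
Qed.

Section Inf.
Variable G : zmodType.
Variable p : nat.
Hypothesis pr : prime p.
Variable S : G -> Prop.
Variable pi : G -> G.
Variable k : nat.
Hypothesis prS : proj S pi.
Hypothesis bS : bnd p S k.+1.
Hypothesis nf : ~ finite_set (topS p S k).

Let top (z : G) := z *+ p ^ k.

Lemma p_gt0 : (0 < p)%N. Proof. exact: prime_gt0. Qed.

Lemma top_p z : S z -> top z *+ p = 0.
Proof. by move=> Sz; rewrite /top -mulrnA -expnSr bS. Qed.

Definition spanL (l : seq G) y :=
  exists c : nat -> nat, y = \sum_(0 <= j < size l) top (nth 0 l j) *+ c j.

Lemma span_fin l : (forall z, z \in l -> S z) -> finite_set (spanL l).
Proof.
elim: l => [|a l IH] hl.
  by exists [:: 0] => y [c ->]; rewrite big_geq // inE.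
have Sa : S a by apply: hl; rewrite inE eqxx.
have fl : finite_set (spanL l) by apply: IH => z zl; apply: hl; rewrite inE zl orbT.
apply: (fin_sum (fin_cyc p_gt0 (top_p Sa)) fl).
move=> y [c ->]; rewrite /= big_nat_recl //=.
exists (top a *+ c 0%N), (\sum_(0 <= j < size l) top (nth 0 l j) *+ c j.+1); split => //.
- by exists (c 0%N).
- by exists (fun j => c j.+1).
Qed.

Definition next l := epsilon (inhabits (0 : G)) (fun s => S s /\ ~ spanL l (top s)).

Lemma next_spec l : (forall z, z \in l -> S z) -> S (next l) /\ ~ spanL l (top (next l)).
Proof.
move=> hl; apply: (epsilon_spec (inhabits (0 : G)) (fun s => S s /\ ~ spanL l (top s))).
apply: NNPP => nex; apply: nf; apply: (fin_sub (span_fin hl)) => z [s [Ss ->]].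
by apply: NNPP => ns; apply: nex; exists s.
Qed.

Fixpoint xs i := if i is i'.+1 then rcons (xs i') (next (xs i')) else [::].
Definition xx i := next (xs i).

Lemma xs_mk i : xs i = mkseq xx i.
Proof. elim: i => [|i IH]; first by []. by rewrite /= mkseqS -IH. Qed.

Lemma xs_S i : forall z, z \in xs i -> S z.
Proof.
elim: i => [|i IH] z //=; rewrite mem_rcons inE => /orP[/eqP ->|]; last exact: IH.
exact: (next_spec IH).1.
Qed.

Lemma xS i : S (xx i). Proof. exact: (next_spec (@xs_S i)).1. Qed.
Lemma xnot i : ~ spanL (xs i) (top (xx i)). Proof. exact: (next_spec (@xs_S i)).2. Qed.

Lemma span_x i (c : nat -> nat) : spanL (xs i) (\sum_(0 <= j < i) top (xx j) *+ c j).
Proof.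
exists c; rewrite xs_mk size_mkseq; apply: eq_big_nat => j /andP[_ ji].
by rewrite nth_mkseq.
Qed.

Lemma indep N (c : nat -> nat) : \sum_(0 <= j < N) top (xx j) *+ c j = 0 ->
  forall j, (j < N)%N -> (p %| c j)%N.
Proof.
elim: N => [|N IH] hs j jN //.
move: hs; rewrite big_nat_recr //= => hs.
have zp : top (xx N) *+ p = 0 := top_p (xS N).
have sp : (\sum_(0 <= j < N) top (xx j) *+ c j) *+ p = 0.
  by rewrite -sumrMnl big1 // => i _; rewrite mulrnAC (top_p (xS i)) mul0rn.
case pc: (p %| c N)%N.
  have zc : top (xx N) *+ c N = 0 := mulrn_dvd0 zp pc.
  move: hs; rewrite zc addr0 => hs.
  by move: jN; rewrite ltnS leq_eqVlt => /orP[/eqP ->|]; [rewrite pc | exact: IH].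
exfalso; have cop : coprime p (c N) by rewrite prime_coprime // pc.
have [u hu] := coprime_div cop zp.
apply: (@xnot N); rewrite -hu mulrnAC.
have -> : top (xx N) *+ c N = - \sum_(0 <= j < N) top (xx j) *+ c j.
  by apply/eqP; rewrite -addr_eq0 addrC hs.
rewrite (neg_bnd p_gt0 sp) -!mulrnA -sumrMnl.
have -> : \sum_(0 <= i < N) top (xx i) *+ c i *+ (p.-1 * u) =
   \sum_(0 <= i < N) top (xx i) *+ (c i * (p.-1 * u)) by apply: eq_bigr => i _; rewrite -mulrnA.
exact: span_x.
Qed.


Let P := (p ^ k.+1)%N.
Lemma P_gt0 : (0 < P)%N. Proof. by rewrite expn_gt0 p_gt0. Qed.
Lemma xP j : xx j *+ P = 0. Proof. exact: bS (xS j). Qed.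

Lemma dvd_coef m : (m <= k.+1)%N -> forall M (a : nat -> nat),
  (\sum_(0 <= j < M) xx j *+ a j) *+ p ^ (k.+1 - m) = 0 -> forall j, (j < M)%N -> (p ^ m %| a j)%N.
Proof.
elim: m => [|m IH] mk M a H j jM; first by rewrite expn0 dvd1n.
have mk' : (m <= k)%N by [].
have H' : (\sum_(0 <= j < M) xx j *+ a j) *+ p ^ (k.+1 - m) = 0.
  by move: H; rewrite subSS subSn // expnSr mulrnA => ->; rewrite mul0rn.
have dm := IH (ltnW mk) M a H'.
have E : (\sum_(0 <= j < M) xx j *+ a j) *+ p ^ (k.+1 - m.+1) =
    \sum_(0 <= j < M) top (xx j) *+ (a j %/ p ^ m)%N.
  rewrite -sumrMnl; apply: eq_big_nat => i /andP[_ iM].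
  set q := (a i %/ p ^ m)%N; have ai : a i = (q * p ^ m)%N by rewrite divnK // dm.
  by rewrite ai subSS -mulrnA -mulnA -expnD subnKC // mulnC mulrnA.
have H2 : \sum_(0 <= j < M) top (xx j) *+ (a j %/ p ^ m)%N = 0 by rewrite -E.
have := indep H2 jM.
move=> dq; rewrite -(divnK (dm j jM)) expnS; exact: dvdn_mul.
Qed.

Lemma coef_eq M (a b : nat -> nat) : \sum_(0 <= j < M) xx j *+ a j = \sum_(0 <= j < M) xx j *+ b j ->
  forall j, (j < M)%N -> forall y : G, y *+ P = 0 -> y *+ a j = y *+ b j.
Proof.
move=> E j jM y yP.
have sbP : (\sum_(0 <= j < M) xx j *+ b j) *+ P = 0.
  by rewrite -sumrMnl big1 // => i _; rewrite mulrnAC xP mul0rn.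
have H : (\sum_(0 <= j < M) xx j *+ (a j + b j * P.-1)%N) *+ p ^ (k.+1 - k.+1) = 0.
  rewrite subnn expn0 mulr1n.
  under eq_bigr do rewrite mulrnDr mulrnA.
  by rewrite big_split /= sumrMnl -(neg_bnd P_gt0 sbP) E subrr.
have d := dvd_coef (leqnn _) H jM.
have := mulrn_dvd0 yP d; rewrite mulrnDr mulrnA -(neg_bnd P_gt0) => [|]; last first.
  by rewrite mulrnAC yP mul0rn.
by move/eqP; rewrite addr_eq0 opprK => /eqP.
Qed.

Definition Bset y := exists M (a : nat -> nat), y = \sum_(0 <= j < M) xx j *+ a j.
Definition Bi i y := exists M (a : nat -> nat), y = \sum_(i <= j < M) xx j *+ a j.

Definition sh y :=
  let ma := epsilon (inhabits (0%N, fun _ : nat => 0%N))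
    (fun ma : nat * (nat -> nat) => y = \sum_(0 <= j < ma.1) xx j *+ ma.2 j) in
  \sum_(0 <= j < ma.1) xx j.+1 *+ ma.2 j.

Lemma welldef M (a : nat -> nat) M' (a' : nat -> nat) :
  \sum_(0 <= j < M) xx j *+ a j = \sum_(0 <= j < M') xx j *+ a' j ->
  \sum_(0 <= j < M) xx j.+1 *+ a j = \sum_(0 <= j < M') xx j.+1 *+ a' j.
Proof.
rewrite (@sum_pad _ xx a M (M + M') (leq_addr _ _)) (@sum_pad _ xx a' M' (M + M') (leq_addl _ _)).
rewrite (@sum_pad _ (fun j => xx j.+1) a M (M + M') (leq_addr _ _)).
rewrite (@sum_pad _ (fun j => xx j.+1) a' M' (M + M') (leq_addl _ _)).
move=> E; apply: eq_big_nat => j /andP[_ jK]; apply: (coef_eq E jK). exact: xP.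
Qed.

Lemma sh_spec M (a : nat -> nat) : sh (\sum_(0 <= j < M) xx j *+ a j) = \sum_(0 <= j < M) xx j.+1 *+ a j.
Proof.
rewrite /sh; set ma := epsilon _ _.
have : \sum_(0 <= j < M) xx j *+ a j = \sum_(0 <= j < ma.1) xx j *+ ma.2 j.
  by apply: (epsilon_spec (inhabits (0%N, fun _ : nat => 0%N))
    (fun ma : nat * (nat -> nat) => \sum_(0 <= j < M) xx j *+ a j = \sum_(0 <= j < ma.1) xx j *+ ma.2 j)); exists (M, a).
by move/welldef ->.
Qed.

Lemma sh0 : sh 0 = 0.
Proof. by have := sh_spec 0 (fun _ => 0%N); rewrite !big_geq. Qed.

Lemma sh_Bi i M (a : nat -> nat) : sh (\sum_(i <= j < M) xx j *+ a j) = \sum_(i <= j < M) xx j.+1 *+ a j.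
Proof.
case: (leqP i M) => iM; last by rewrite !big_geq ?sh0 // ltnW.
by rewrite (sum_shift0 xx a iM) sh_spec (sum_shift0 (fun j => xx j.+1) a iM).
Qed.

Lemma Bi_B i y : Bi i y -> Bset y.
Proof.
move=> [M [a ->]]; case: (leqP i M) => iM; last by exists 0%N, a; rewrite !big_geq // ltnW.
by rewrite (sum_shift0 xx a iM); eexists; eexists.
Qed.

Lemma sh_Bi_mem i y : Bi i y -> Bi i.+1 (sh y).
Proof.
move=> [M [a ->]]; rewrite sh_Bi (sum_shift1 xx a i M).
by exists M.+1, (fun j => a j.-1).
Qed.

Lemma Bset_pad y1 y2 : Bset y1 -> Bset y2 -> exists K (a b : nat -> nat),
  y1 = \sum_(0 <= j < K) xx j *+ a j /\ y2 = \sum_(0 <= j < K) xx j *+ b j.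
Proof.
move=> [M1 [a1 ->]] [M2 [a2 ->]]; exists (M1 + M2)%N; eexists; eexists; split.
- exact: (@sum_pad _ xx a1 M1 (M1 + M2) (leq_addr _ _)).
- exact: (@sum_pad _ xx a2 M2 (M1 + M2) (leq_addl _ _)).
Qed.

Lemma sh_add y1 y2 : Bset y1 -> Bset y2 -> sh (y1 + y2) = sh y1 + sh y2.
Proof.
move=> B1 B2; have [K [a [b [-> ->]]]] := Bset_pad B1 B2.
rewrite -big_split /=.
have -> : \sum_(0 <= i < K) (xx i *+ a i + xx i *+ b i) = \sum_(0 <= i < K) xx i *+ (a i + b i)%N.
  by apply: eq_bigr => i _; rewrite mulrnDr.
rewrite !sh_spec -big_split /=; apply: eq_bigr => i _; by rewrite mulrnDr.
Qed.

Lemma Bset_S y : Bset y -> S y.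
Proof.
have [S0 [SD SN]] := proj_sub prS.
move=> [M [a ->]]; elim: M => [|M IH]; first by rewrite big_geq.
rewrite big_nat_recr //=; apply: SD => //; exact: mulrn_add_closed (proj_sub prS) _ _ (xS M).
Qed.

Lemma Bset_sub : is_subgroup Bset.
Proof.
split; first by exists 0%N, (fun _ => 0%N); rewrite big_geq.
split.
  move=> y1 y2 B1 B2; have [K [a [b [-> ->]]]] := Bset_pad B1 B2.
  exists K, (fun j => a j + b j)%N; rewrite -big_split /=.
  by apply: eq_bigr => i _; rewrite mulrnDr.
move=> y By; have yP : y *+ P = 0 := bS (Bset_S By).
rewrite (neg_bnd P_gt0 yP); case: By => M [a ->].
exists M, (fun j => a j * P.-1)%N; rewrite -sumrMnl.
by apply: eq_bigr => i _; rewrite mulrnA.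
Qed.

Lemma Bset_inj : injcond p Bset k.+1.
Proof.
move=> _ m [M [a ->]] mk H.
have d := dvd_coef mk H.
exists (\sum_(0 <= j < M) xx j *+ (a j %/ p ^ m)%N); split; first by eexists; eexists.
rewrite -sumrMnl; apply: eq_big_nat => i /andP[_ iM].
by rewrite -mulrnA divnK // d.
Qed.

Lemma notBi i : ~ Bi i.+1 (xx i).
Proof.
move=> [M [a E]].
have x0 : xx i = 0.
  case: (leqP M i.+1) => Mi; first by rewrite E big_geq.
  have xi : xx i = \sum_(i <= j < i.+1) xx j *+ 1 by rewrite big_nat1 mulr1n.
  have := E; rewrite {1}xi.
  rewrite (sum_shift0 xx (fun _ => 1%N) (leqnSn i)) (sum_shift0 xx a (ltnW Mi)).
  rewrite (@sum_pad _ xx _ i.+1 M (ltnW Mi)) => E2.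
  have := coef_eq E2 (ltnW Mi) (xP i).
  by rewrite ltnSn leqnn ltnn mulr1n mulr0n.
apply: (@xnot i); exists (fun _ => 0%N); rewrite /top x0 mul0rn big1 // => j _; rewrite mulr0n.
Qed.

Hypothesis hco : strongly_coHopfian G.

Lemma inf_contra : False.
Proof.
have [rho [ra rB rid]] := ext pr prS bS Bset_sub Bset_S Bset_inj.
pose f y := sh (rho y).
have fe : is_endo f by move=> y z; rewrite /f ra sh_add //; apply: rB.
have xBi j : xx j = \sum_(j <= l < j.+1) xx l *+ 1 by rewrite big_nat1 mulr1n.
have fx j : f (xx j) = xx j.+1.
  rewrite /f rid; last by apply: (@Bi_B j); rewrite xBi; eexists; eexists.
  by rewrite {1}xBi sh_Bi big_nat1 mulr1n.
have itx i : iter i f (xx 0) = xx i by elim: i => [|i IH] //=; rewrite IH fx.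
have itB i y : Bi i.+1 (iter i.+1 f y).
  elim: i => [|i IH] /=.
    by apply: sh_Bi_mem; case: (rB y) => M [a ->]; exists M, a.
  by rewrite /f rid; [exact: sh_Bi_mem | exact: Bi_B IH].
have [N HN] := hco fe.
have [h1 _] := HN (xx N).
have [|y hy] := h1; first by exists (xx 0); exact: itx.
by apply: (@notBi N); rewrite -hy; exact: itB.
Qed.

End Inf.

Section Fin2.
Variable G : zmodType.
Variable p : nat.
Hypothesis pr : prime p.
Hypothesis hco : strongly_coHopfian G.

Lemma inf_case (S : G -> Prop) pi k : proj S pi -> bnd p S k.+1 -> ~ finite_set (topS p S k) -> False.
Proof. move=> prS bS nf; exact: (inf_contra pr prS bS nf hco). Qed.

Lemma Fin n : forall (S : G -> Prop) (pi : G -> G), proj S pi -> bnd p S n -> finite_set S.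
Proof.
elim: n => [|k IHk] S pi prS bS.
  by exists [:: 0] => s /bS; rewrite expn0 mulr1n => ->; rewrite inE.
case: (classic (finite_set (topS p S k))) => [[L hL]|nf]; last by case: (inf_case prS bS nf).
have : exists L', (size L' <= size L)%N /\ forall s, S s -> s *+ p ^ k \in L'.
  by exists L; split => // s Ss; apply: hL; exists s.
move: (size L) => m; elim: m S pi prS bS {L hL} => [|m IHm] S pi prS bS [L [sL hL]].
  have [S0 _] := proj_sub prS.
  case: L sL hL => [_ hL|a l sL _]; last by move: sL. move: (hL _ S0). by rewrite in_nil.
case: (classic (exists y, S y /\ y *+ p ^ k != 0)) => [[y [Sy yk]]|none]; last first.
  apply: (IHk S pi prS) => s Ss; apply: NNPP => ne; apply: none; exists s; split => //.
  by apply/eqP.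
have [S' [pi' [prS' bS' S'S S'top fin']]] := peel pr prS bS Sy yk.
apply: fin'; apply: (IHm S' pi' prS' bS').
exists (filter (fun z => z != y *+ p ^ k) L); split.
  rewrite -ltnS (leq_trans _ sL) // size_filter.
  rewrite -(count_predC (fun z => z != y *+ p ^ k) L) -addn1 leq_add2l.
  rewrite -has_count; apply/hasP; exists (y *+ p ^ k); first by apply: hL.
  by rewrite /= eqxx.
by move=> s S's; rewrite mem_filter S'top //= hL //; apply: S'S.
Qed.

End Fin2.


Section Main.
Variable G : zmodType.
Hypothesis hred : reduced G.
Hypothesis hco : strongly_coHopfian G.
Implicit Types (x y z t u : G).

Lemma part1 p : prime p -> finite_set (p_comp (G:=G) p).
Proof.
move=> pr.
have fS := @Fin G p pr hco (coH_N G p) (fun x => x *+ p ^ coH_N G p = 0) (pip p).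
apply: (fin_sub (fS _ _)).
- split; first by move=> x y; apply: (@pip_add G hred hco p pr x y).
    by move=> x; apply: (@pip_bnd G hco p x).
  by move=> x; apply: (@pip_id G hred hco p pr x).
- by move=> s.
- by move=> x [k hk]; exact: (@tors_bnd G hred hco p pr x k hk).
Qed.

Definition phiG x (n : nat) : G := if prime n then pip n x else 0.

Lemma phi_add x y n : phiG (x + y) n = phiG x n + phiG y n.
Proof. by rewrite /phiG; case: ifP => pn; [rewrite pip_add | rewrite addr0]. Qed.

Lemma phi_neg x n : phiG (- x) n = - phiG x n.
Proof. by rewrite /phiG; case: ifP => pn; [rewrite (add_neg (pip_add hred hco pn)) | rewrite oppr0]. Qed.

Lemma phi_mulrn x m n : phiG (x *+ m) n = phiG x n *+ m.
Proof. by rewrite /phiG; case: ifP => pn; [rewrite pip_mulrn | rewrite mul0rn]. Qed.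

Lemma phi_prod x : in_prodT (phiG x).
Proof.
split; last by move=> n /negbTE; rewrite /phiG => ->.
by move=> p pr; rewrite /phiG pr; exists (coH_N G p); exact: pip_bnd.
Qed.

Lemma big_prime_zero n a m u : prime n -> u *+ n ^ a = 0 -> u *+ m = 0 -> (0 < m)%N -> (m < n)%N -> u = 0.
Proof.
move=> pn ua um m0 mn; apply: (coprime_zero _ ua um).
apply: coprimeXl; rewrite prime_coprime //; apply/negP => /(dvdn_leq m0).
by rewrite leqNgt mn.
Qed.

Lemma phi_tors t r : (0 < r)%N -> t *+ r = 0 -> fin_supp (phiG t).
Proof.
move=> r0 tr; exists r.+1 => n rn; rewrite /phiG; case: ifP => pn //.
apply: (big_prime_zero pn (pip_bnd hco n t) _ r0 rn).
by rewrite -pip_mulrn // tr (add_0 (pip_add hred hco pn)).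
Qed.

Definition Kset z := forall p, prime p -> pip p z = 0.

Lemma K_qdiv q d : prime q -> Kset d -> exists e, Kset e /\ e *+ q = d.
Proof.
move=> pq Kd; have [e [He eq]] := Hp_pdiv hco (pip0_H hco (Kd q pq)).
exists e; split => // r pr.
case: (eqVneq r q) => [->|rq]; first exact: pip_H.
apply: (coprime_zero _ (pip_bnd hco r e) (_ : _ *+ q = 0)).
  by apply: coprimeXl; rewrite prime_coprime // dvdn_prime2.
by rewrite -pip_mulrn // eq Kd.
Qed.

Lemma K_div n : (0 < n)%N -> forall d, Kset d -> exists e, Kset e /\ e *+ n = d.
Proof.
elim: n {-2}n (leqnn n) => [|N IH] n nN n0 d Kd; first by move: n0 nN; case: n.
case: (ltngtP n 1) => [n1|n1|n1]; first by move: n0 n1; case: n {nN}.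
- have pq := pdiv_prime n1; have dq := pdiv_dvd n.
  set q := pdiv n in pq dq.
  have [e1 [Ke1 he1]] := K_qdiv pq Kd.
  have n'0 : (0 < n %/ q)%N by rewrite divn_gt0 ?prime_gt0 // dvdn_leq.
  have n'N : (n %/ q <= N)%N.
    rewrite -ltnS (leq_trans _ nN) // ltn_Pdiv // prime_gt1 //.
  have [e [Ke he]] := IH _ n'N n'0 e1 Ke1.
  by exists e; split => //; rewrite -(divnK dq) mulrnA he.
- by exists d; split => //; rewrite n1.
Qed.

Lemma K_zero z : Kset z -> z = 0.
Proof.
apply: hred.
- split; first by move=> p pr; exact: (add_0 (pip_add hred hco pr)).
  split; first by move=> x y Kx Ky p pr; rewrite pip_add // Kx // Ky // addr0.
  by move=> x Kx p pr; rewrite (add_neg (pip_add hred hco pr)) Kx // oppr0.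
- by move=> d n Kd n0; exact: K_div.
Qed.

Lemma phi_embeds : embeds_into_prodT phiG.
Proof.
split; first exact: phi_prod.
split; first exact: phi_add.
move=> x y E; apply/eqP; rewrite -subr_eq0; apply/eqP; apply: K_zero => p pr.
by have := E p; rewrite /phiG pr => Ep; rewrite (@pip_add G hred hco p pr) (add_neg (@pip_add G hred hco p pr)) Ep subrr.
Qed.


Lemma phi0 n : phiG 0 n = 0.
Proof. exact: (add_0 (fun x y => phi_add x y n)). Qed.

Lemma phi_sub x y n : phiG (x - y) n = phiG x n - phiG y n.
Proof. by rewrite phi_add phi_neg. Qed.

Lemma phi_sum (v : nat -> G) N n : phiG (\sum_(0 <= i < N) v i) n = \sum_(0 <= i < N) phiG (v i) n.
Proof.
elim: N => [|N IH]; first by rewrite !big_geq // phi0.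
by rewrite !big_nat_recr //= phi_add IH.
Qed.

Lemma phi_contains : image_contains_sumT phiG.
Proof.
move=> v [[vp vnp] [N hN]]; exists (\sum_(0 <= i < N) v i) => n.
rewrite phi_sum.
have E i : phiG (v i) n = if i == n then v n else 0.
  case: (eqVneq i n) => [->|ine].
    rewrite /phiG; case: ifP => pn; first exact: (@pcomp_pip G hred hco n pn _ (vp n pn)).
    by rewrite vnp // pn.
  rewrite /phiG; case: ifP => pn //.
  case pi: (prime i); last by rewrite vnp ?pi // (add_0 (@pip_add G hred hco n pn)).
  have [c hc] := vp i pi.
  exact: (@pip_other G hred hco n pn i (v i) c pi ine hc).
rewrite (eq_bigr _ (fun i _ => E i)) -big_mkcond big_nat1_eq.
by case: ifP => //= nN; rewrite hN // leqNgt nN.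
Qed.

Lemma phi_tf : quotient_torsion_free phiG.
Proof.
move=> x m m0 [N hN]; exists (N + m.+1)%N => n nN.
rewrite /phiG; case: ifP => pn //.
have mn : (m < n)%N by apply: leq_trans nN; rewrite leq_addl.
apply: (big_prime_zero pn (pip_bnd hco n x) _ m0 mn).
have := hN n (leq_trans (leq_addr _ _) nN); by rewrite /phiG pn.
Qed.

Lemma div_tors m : (0 < m)%N -> forall x, exists y r, (0 < r)%N /\ (y *+ m - x) *+ r = 0.
Proof.
elim: m {-2}m (leqnn m) => [|M IH] m mM m0 x; first by move: m0 mM; case: m.
case: (ltngtP m 1) => [m1|m1|m1]; first by move: m0 m1; case: m {mM}.
- have pq := pdiv_prime m1; have dq := pdiv_dvd m.
  set q := pdiv m in pq dq.
  have [e [He eq]] := Hp_pdiv hco (hpart_spec hco q x).1.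
  have m'0 : (0 < m %/ q)%N by rewrite divn_gt0 ?prime_gt0 // dvdn_leq.
  have m'M : (m %/ q <= M)%N.
    rewrite -ltnS (leq_trans _ mM) // ltn_Pdiv // prime_gt1 //.
  have [y [r [r0 hr]]] := IH _ m'M m'0 e.
  exists y, (r * q ^ coH_N G q)%N; split; first by rewrite muln_gt0 r0 expn_gt0 prime_gt0.
  have -> : y *+ m - x = (y *+ (m %/ q) - e) *+ q + (e *+ q - x).
    by rewrite -{1}(divnK dq) mulrnA mulrnBl addrA subrK.
  rewrite mulrnDl mulrnAC mulrnA hr !mul0rn add0r.
  have -> : e *+ q - x = - pip q x by rewrite eq /pip opprB.
  by rewrite mulNrn mulrnA mulrnAC (pip_bnd hco) mul0rn oppr0.
- by exists x, 1%N; split => //; rewrite m1 subrr mul0rn.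
Qed.

Lemma phi_div : quotient_divisible phiG.
Proof.
move=> x m m0; have [y [r [r0 hr]]] := div_tors m0 x.
have [N hN] := phi_tors r0 hr; exists y, N => n nN.
by rewrite -phi_mulrn -phi_sub; exact: hN.
Qed.

Lemma phi_pure : image_pure phiG.
Proof.
move=> x m m0 [v [[vp vnp] hv]].
have [y0 [r [r0 hr]]] := div_tors m0 x.
have [N hN] := phi_tors r0 hr.
pose w n := v n - phiG y0 n.
have wprod : in_prodT w.
  split.
    move=> p pr; have [a ha] := vp p pr; have [b hb] := (phi_prod y0).1 p pr.
    exists (a + b)%N; rewrite /w mulrnBl expnD !mulrnA ha mul0rn mulrnAC hb mul0rn subrr //.
  by move=> n pn; rewrite /w vnp // /phiG (negbTE pn) subrr.
have wfin : fin_supp w.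
  exists (N + m.+1)%N => n nN.
  have mn : (m < n)%N by apply: leq_trans nN; rewrite leq_addl.
  have wm : w n *+ m = 0.
    rewrite /w mulrnBl hv -phi_mulrn -opprB -phi_sub hN ?oppr0 //.
    exact: leq_trans (leq_addr _ _) nN.
  case pn: (prime n); last by apply: wprod.2; rewrite pn.
  have [c hc] := wprod.1 n pn.
  exact: big_prime_zero pn hc wm m0 mn.
have [z hz] := phi_contains (conj wprod wfin).
exists (y0 + z) => n; rewrite phi_add hz /w addrC subrK; exact: hv.
Qed.

End Main.

Theorem mainTheorem3 (G : zmodType) :
  reduced G -> strongly_coHopfian G ->
  (forall p : nat, prime p -> finite_set (p_comp (G:=G) p)) /\
  (exists phi : G -> nat -> G,
      embeds_into_prodT phi /\ image_contains_sumT phi /\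
      quotient_torsion_free phi /\ quotient_divisible phi) /\
  (infinitely_many_Tp G -> sp_group G).
Proof.
move=> hred hco; split; first exact: part1.
split.
  exists (phiG (G:=G)); split; first exact: phi_embeds.
  split; first exact: phi_contains.
  by split; [exact: phi_tf | exact: phi_div].
move=> inf; split => //; exists (phiG (G:=G)); split; first exact: phi_embeds.
by split; [exact: phi_contains | exact: phi_pure].
Qed.
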